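(* In the setting described in the context, for all $c>0$ and all sufficiently large $m$, $$\sum_{i=1}^m\big[1-2\mathsf{Q}(z_i(c))\big]z_i(c)\ \ge\ 0.21\,\frac{q}{m^2}\,\frac{(1+c)^2}{1+c^2}\,\Delta^2.$$
   Context: Two agents $a,b$, $m$ items, utilities $u^a_i,u^b_i\in[0,1]$, additive. For an allocation (partition $(\mathcal{A}_a,\mathcal{A}_b)$ of $[m]$), $\mathrm{Envy}_{a\to b}=\sum_{i\in\mathcal{A}_b}u^a_i-\sum_{i\in\mathcal{A}_a}u^a_i$, $\mathrm{Envy}_{b\to a}=\sum_{i\in\mathcal{A}_a}u^b_i-\sum_{i\in\mathcal{A}_b}u^b_i$, $\mathrm{Envy}=\max$ of the two, and it is assumed that $\min_{\mathcal{A}}\mathrm{Envy}(\mathcal{A})\le-\Delta$, where $\Delta=\Delta(m)$ satisfies $\Delta\ge m^{1/4}\log^2m$ and $\Delta=o(m/\log m)$. The number of queries is $q=m\lceil15\frac{m^{3/2}}{\Delta^2}\log m+\log^2m\rceil$. Define $z_i(c)=\sqrt{\frac{q}{m(1+c^2)}}(cu^a_i-u^b_i)$ and $\mathsf{Q}(z)=\frac1{\sqrt{2\pi}}\int_z^\infty e^{-x^2/2}dx$. $\log$ is natural. *)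

(* Defs.v *)
From HB Require Import structures.
From mathcomp Require Import all_boot all_order all_algebra.
From mathcomp Require Import all_classical all_reals all_analysis.
Set Implicit Arguments. Unset Strict Implicit. Unset Printing Implicit Defensive.
Import Order.TTheory GRing.Theory Num.Theory.
Import numFieldNormedType.Exports.
Local Open Scope classical_set_scope.
Local Open Scope ring_scope.

Definition gaussQ (R : realType) (z : R) : R :=
  (Num.sqrt (2 * pi))^-1 *
  Rintegral (@lebesgue_measure R) `[z, +oo[ (fun x : R => expR (- (x ^+ 2) / 2)).

(* Allocation: A is the bundle of agent a, its complement ~: A that of agent b. *)
Definition envy_ab (R : realType) (m : nat) (ua : 'I_m -> R) (A : {set 'I_m}) : R :=
  \sum_(i in ~: A) ua i - \sum_(i in A) ua i.
Definition envy_ba (R : realType) (m : nat) (ub : 'I_m -> R) (A : {set 'I_m}) : R :=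
  \sum_(i in A) ub i - \sum_(i in ~: A) ub i.
Definition envy (R : realType) (m : nat) (ua ub : 'I_m -> R) (A : {set 'I_m}) : R :=
  Num.max (envy_ab ua A) (envy_ba ub A).

Definition nqueries (R : realType) (m : nat) (D : R) : R :=
  m%:R * (Num.ceil (15 * (m%:R `^ (3 / 2)) / D ^+ 2 * ln (m%:R : R)
                   + (ln (m%:R : R)) ^+ 2))%:~R.

Definition zval (R : realType) (m : nat) (q : R) (ua ub : 'I_m -> R) (c : R) (i : 'I_m) : R :=
  Num.sqrt (q / (m%:R * (1 + c ^+ 2))) * (c * ua i - ub i).

(* Main.v *)
Require Import Defs.
From HB Require Import structures.
From mathcomp Require Import all_boot all_order all_algebra.
From mathcomp Require Import all_classical all_reals all_analysis.
From mathcomp Require Import ring lra measurable_realfun normal_distribution gauss_integral.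
Import Order.TTheory GRing.Theory Num.Theory.
Import numFieldNormedType.Exports.
Local Open Scope classical_set_scope.
Local Open Scope ring_scope.


Section G.
Context {R : realType}.
Notation mu := (@lebesgue_measure R).
Definition phi (x : R) : R := expR (- (x ^+ 2) / 2).

Lemma phiE : phi = normal_fun 0 1.
Proof. by apply/funext => x; rewrite /phi /normal_fun subr0 expr1n. Qed.

Lemma phi_ge0 x : 0 <= phi x. Proof. exact: expR_ge0. Qed.

Lemma mphi : measurable_fun setT phi.
Proof. rewrite phiE; exact: measurable_normal_fun. Qed.

Lemma cphi : continuous phi.
Proof.
move=> x; apply: (cvg_comp _ expR); last exact: continuous_expR.
apply: cvgM; last exact: cvg_cst.
apply: (@cvgN _ R^o).
exact: sqr_continuous.
Qed.

Lemma intT_phi : (\int[mu]_x (phi x)%:E = (Num.sqrt (2 * pi))%:E)%E.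
Proof.
have := @integral_normal_pdf R 0 1.
have -> : normal_pdf 0 1 = fun x => normal_peak 1 * phi x.
  by rewrite normal_pdfE ?oner_neq0// phiE.
under eq_integral do rewrite EFinM.
rewrite ge0_integralZl//=; last 3 first.
- by apply/measurable_EFinP; exact: mphi.
- by move=> x _; rewrite lee_fin phi_ge0.
- exact: normal_peak_ge0.
move=> h.
have hp : normal_peak 1 != 0 :> R by rewrite gt_eqF// normal_peak_gt0// oner_neq0.
have : (\int[mu]_x (phi x)%:E)%E = ((normal_peak 1)^-1)%:E.
  move: h; case: (\int[mu]_x (phi x)%:E)%E => [r||] /=.
  - by rewrite -EFinM => -[] /(congr1 (fun t => (normal_peak 1)^-1 * t)); rewrite mulKf// mulr1 => ->.
  - by rewrite gt0_muley ?lte_fin ?normal_peak_gt0 ?oner_neq0.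
  - by rewrite gt0_muleNy ?lte_fin ?normal_peak_gt0 ?oner_neq0.
move=> ->; rewrite /normal_peak invrK expr1n mul1r.
by rewrite -mulr_natl.
Qed.

Lemma int0y_phi : (\int[mu]_(x in `[0%R, +oo[) (phi x)%:E = (Num.sqrt (2 * pi) / 2)%:E)%E.
Proof.
have := intT_phi; rewrite ge0_symfun_integralT//; last 3 first.
- exact: phi_ge0.
- exact: cphi.
- by move=> x /=; rewrite /phi sqrrN.
rewrite (_ : [set x | _] = `[0%R, +oo[%classic); last first.
  by apply/seteqP; split => x/=; rewrite in_itv/= andbT.
case: (\int[mu]_(x in `[0%R, +oo[) (phi x)%:E)%E => [r||] //=.
- by rewrite -EFinM => -[] <-; congr EFin; rewrite mulrC mulKf.
- by rewrite gt0_muley ?lte_fin.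
- by rewrite gt0_muleNy ?lte_fin.
Qed.

Lemma intphi_setT : mu.-integrable setT (EFin \o phi).
Proof.
apply/integrableP; split; first by apply/measurable_EFinP; exact: mphi.
under eq_integral do rewrite /= ger0_norm ?phi_ge0//.
by rewrite intT_phi ltry.
Qed.

Lemma intphi A : measurable A -> mu.-integrable A (EFin \o phi).
Proof. by move=> mA; apply: integrableS intphi_setT. Qed.

Definition G (z : R) := \int[mu]_(x in `[z, +oo[) phi x.

Lemma G0 : G 0 = Num.sqrt (2 * pi) / 2.
Proof. by rewrite /G /Rintegral int0y_phi. Qed.

Lemma Gpos z : 0 <= z -> G z = G 0 - \int[mu]_(x in `[0, z]) phi x.
Proof.
move=> z0; rewrite /G.
rewrite Rintegral_itvB; last 3 first.
- exact: intphi.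
- by rewrite bnd_simp.
- by rewrite bnd_simp.
by rewrite Rintegral_itv_obnd_cbnd //; exact: intphi.
Qed.

Lemma Gneg z : z <= 0 -> G z = G 0 + \int[mu]_(x in `[z, 0]) phi x.
Proof.
move=> z0; rewrite /G.
have := @Rintegral_itvB R phi (BLeft z) (BInfty _ false) 0.
rewrite Rintegral_itv_obnd_cbnd; last exact: intphi.
move=> <- //; [by rewrite subrK | exact: intphi].
Qed.

Lemma phi_lb x : -1 <= x <= 1 -> 1/2 <= phi x.
Proof.
move=> /andP[x1 x2].
apply: le_trans (expR_ge1Dx _).
have : x ^+ 2 <= 1 by rewrite -ler_sqrt ?sqrtr1 ?sqrtr_sqr ?ler_norml ?x1 ?x2 // sqr_ge0.
lra.
Qed.

Lemma int_lb a b : -1 <= a -> a <= b -> b <= 1 -> (b - a) / 2 <= \int[mu]_(x in `[a, b]) phi x.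
Proof.
move=> a1 ab b1.
have -> : (b - a) / 2 = \int[mu]_(x in `[a, b]) (1/2 : R).
  rewrite Rintegral_cst//.
  have := @lebesgue_measure_itv R `[a, b]. move=> /= ->.
  case: ltP => ab' /=.
    by rewrite /= mulrC mul1r.
  move: ab'; rewrite lee_fin => ab'.
  have -> : b - a = 0 by lra.
  by rewrite mul0r mulr0.
apply: le_Rintegral => //.
- apply/integrableP; split; first exact: measurable_cst.
  rewrite integral_cst//=.
  have := @lebesgue_measure_itv R `[a, b]. move=> /= ->.
  by case: ifP => _ /=; rewrite ?mule0// -EFinM ltry.
- by apply: intphi.
move=> x /=; rewrite in_itv/= => /andP[ax xb].
apply: phi_lb; apply/andP; split; lra.
Qed.

Lemma intpos_lb z : 0 <= z -> Num.min z 1 / 2 <= \int[mu]_(x in `[0, z]) phi x.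
Proof.
move=> z0; case: (leP z 1) => z1.
  by have := int_lb (0) (z); rewrite subr0; apply => //; lra.
have h1 := int_lb (0) (1); rewrite subr0 in h1.
apply: le_trans (h1 _ _ _) _; [lra|lra|lra|].
have h := Rintegral_itvB (intphi _ (measurable_itv `[0, z])) (x:=1).
have : \int[mu]_(x in `[0, z]) phi x - \int[mu]_(x in `[0, 1]) phi x >= 0.
  rewrite h //; [ |by rewrite bnd_simp ltW|by rewrite bnd_simp ltW].
  by apply: Rintegral_ge0 => x _; exact: phi_ge0.
lra.
Qed.

Lemma intneg_lb z : z <= 0 -> Num.min (- z) 1 / 2 <= \int[mu]_(x in `[z, 0]) phi x.
Proof.
move=> z0; case: (leP (- z) 1) => z1.
  by have := int_lb (z) (0); rewrite sub0r; apply => //; lra.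
have h1 := int_lb (-1) (0); rewrite sub0r opprK in h1.
apply: le_trans (h1 _ _ _) _; [lra|lra|lra|].
have h := Rintegral_itvB (intphi _ (measurable_itv `[z, 0])) (x:=-1).
rewrite Rintegral_itv_obnd_cbnd in h; last exact: intphi.
have : \int[mu]_(x in `[z, -1]) phi x >= 0.
  by apply: Rintegral_ge0 => x _; exact: phi_ge0.
rewrite -h //; [lra|by rewrite bnd_simp; lra|by rewrite bnd_simp; lra].
Qed.

Lemma sqrt2pi_gt0 : 0 < Num.sqrt (2 * pi) :> R.
Proof. by rewrite sqrtr_gt0 mulr_gt0 ?pi_gt0. Qed.

Lemma sqrt2pi_le3 : Num.sqrt (2 * pi) <= 3 :> R.
Proof.
have h : pi / 2 < 2 :> R := pihalf_lt2 R.
have hs := sqr_sqrtr (a := 2 * pi) (mulr_ge0 (ler0n _ 2) (pi_ge0 R)).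
have hs0 := sqrt2pi_gt0.
nra.
Qed.

Lemma term_lb (z : R) : `|z| * Num.min `|z| 1 / 3 <= (1 - 2 * gaussQ z) * z.
Proof.
have -> : gaussQ z = (Num.sqrt (2 * pi))^-1 * G z by [].
set s := Num.sqrt (2 * pi).
have s0 : 0 < s := sqrt2pi_gt0.
have s3 : s <= 3 := sqrt2pi_le3.
set u := s^-1.
have us : u * s = 1 by rewrite mulVf// gt_eqF.
have u3 : 1/3 <= u.
  rewrite /u -[leRHS]mul1r ler_pdivlMr//; lra.
case: (leP 0 z) => z0.
- have hI := intpos_lb z z0.
  have hG := Gpos z z0; rewrite G0 -/s in hG.
  rewrite ger0_norm//.
  set I := \int[mu]_(x in `[0, z]) phi x in hI hG.
  set M := Num.min z 1 in hI *.
  have M0 : 0 <= M by rewrite /M le_min z0 ler01.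
  have e1 : 1 - 2 * (u * G z) = 2 * u * I.
    rewrite hG; nra.
  rewrite e1.
  have e2 : M / 3 <= 2 * u * I by nra.
  have := ler_wpM2l z0 e2; lra.
- have z0' : z <= 0 by apply: ltW.
  have hI := intneg_lb z z0'.
  have hG := Gneg z z0'; rewrite G0 -/s in hG.
  rewrite ltr0_norm//.
  set I := \int[mu]_(x in `[z, 0]) phi x in hI hG.
  set M := Num.min (- z) 1 in hI *.
  have M0 : 0 <= M by rewrite /M le_min oppr_ge0 z0' ler01.
  have e1 : 1 - 2 * (u * G z) = - (2 * u * I).
    rewrite hG; nra.
  rewrite e1.
  have e2 : M / 3 <= 2 * u * I by nra.
  have z0'' : 0 <= - z by lra.
  have := ler_wpM2l z0'' e2; lra.
Qed.
End G.


Section A.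
Context {R : realType}.

Lemma qbound (M D : R) : 0 < M -> 960 <= M `^ (1 / 4) -> 0 < D -> D * ln M <= M / 8 ->
  let q := M * (Num.ceil (15 * (M `^ (3 / 2)) / D ^+ 2 * ln M + (ln M) ^+ 2))%:~R in
  0 <= q /\ q * D ^+ 2 / M ^+ 3 <= 1 / 8.
Proof.
move=> M0 HM D0 HDL q.
set r := M `^ (1 / 4).
have r0 : 0 <= r := powR_ge0 _ _.
have r4 : r ^+ 4 = M.
  rewrite /r -powR_mulrn// -powRrM.
  have -> : (1 / 4 * 4%:R : R) = 1 by lra.
  by rewrite powRr1// ltW.
have r6 : M `^ (3 / 2) = r ^+ 6.
  rewrite /r -powR_mulrn// -powRrM; congr (M `^ _); lra.
have r960 : 960 <= r := HM.
have rpos : 0 < r by lra.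
set L := ln M.
have Lr : L = 4 * ln r.
  rewrite /r ln_powR /L; lra.
have lnr_lt : ln r < r := ln_sublinear rpos.
have lnr_ge : 1 - r^-1 <= ln r.
  have h := le_ln1Dx (x := r^-1 - 1) _.
  have e : 1 + (r^-1 - 1) = r^-1 by rewrite addrC subrK.
  rewrite e lnV ?posrE// in h.
  have : -1 < r^-1 - 1 by rewrite ltrBrDr addrC subrr invr_gt0.
  move=> /h; lra.
have rinv : r^-1 <= 1/960.
  have ri0 : 0 <= r^-1 by rewrite invr_ge0.
  have := ler_wpM2l ri0 r960.
  rewrite mulVf ?gt_eqF //; lra.
have L1 : 1 <= L by lra.
set E := 15 * (M `^ (3 / 2)) / D ^+ 2 * L + L ^+ 2.
have E0 : 0 <= E.
  rewrite /E addr_ge0 ?sqr_ge0// mulr_ge0 ?(le_trans _ L1)// divr_ge0 ?sqr_ge0//.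
  by rewrite mulr_ge0// powR_ge0.
have hc1 : E <= (Num.ceil E)%:~R := ceil_ge E.
have hc2 : (Num.ceil E)%:~R < E + 1.
  have := gt_pred_ceil E; rewrite rmorphB /=; lra.
split.
  by rewrite /q mulr_ge0 ?(le_trans E0 hc1) // ltW.
have Dn : D ^+ 2 != 0 by rewrite expf_neq0 // gt_eqF.
have eqE : (E + 1) * D ^+ 2 = 15 * r ^+ 6 * L + (L ^+ 2 + 1) * D ^+ 2.
  have h : 15 * r ^+ 6 / D ^+ 2 * L * D ^+ 2 = 15 * r ^+ 6 * L.
    by rewrite mulrAC divfK.
  rewrite /E r6 mulrDl mulrDl h; lra.
have b1 : 15 * r ^+ 6 * L <= M ^+ 2 / 16.
  rewrite -r4 -exprM.
  have h6 : 0 <= r ^+ 6 by rewrite exprn_ge0.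
  have : 15 * r ^+ 6 * L <= 60 * r ^+ 7.
    rewrite Lr exprS. have := ler_wpM2l h6 (ltW lnr_lt). nra.
  have : 60 * r ^+ 7 <= r ^+ 8 / 16.
    rewrite (exprS r 7). have h7 : 0 <= r ^+ 7 by rewrite exprn_ge0.
    have := ler_wpM2l h7 r960. nra.
  lra.
have b2 : (L ^+ 2 + 1) * D ^+ 2 <= M ^+ 2 / 32.
  have DL0 : 0 <= D * L by rewrite mulr_ge0 // ?ltW //; lra.
  have : (D * L) ^+ 2 <= (M / 8) ^+ 2 by rewrite ler_pXn2r ?nnegrE //; lra.
  have : 1 <= L ^+ 2 by rewrite expr2; nra.
  have D20 : 0 <= D ^+ 2 by rewrite sqr_ge0.
  move=> h1 h2.
  have := ler_wpM2l D20 h1.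
  rewrite exprMn in h2. nra.
rewrite ler_pdivrMr ?exprn_gt0 //.
have : q * D ^+ 2 <= M * ((E + 1) * D ^+ 2).
  by rewrite /q -mulrA ler_pM2l // ler_pM2r ?exprn_gt0 // ltW.
rewrite eqE.
have M2 : M ^+ 3 = M * M ^+ 2 by rewrite exprS.
rewrite M2.
have : M * (15 * r ^+ 6 * L + (L ^+ 2 + 1) * D ^+ 2) <= M * (M ^+ 2 / 16 + M ^+ 2 / 32).
  rewrite ler_pM2l //; lra.
have : 0 <= M * M ^+ 2 by rewrite mulr_ge0 ?sqr_ge0 // ltW.
lra.
Qed.
End A.


Section B.
Context {R : realType}.

Lemma sum_lb m (z : 'I_m -> R) x : 0 <= x -> x <= 1/2 ->
  m%:R * x <= \sum_(i < m) `|z i| ->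
  m%:R * x ^+ 2 / 3 <= \sum_(i < m) (1 - 2 * gaussQ (z i)) * z i.
Proof.
move=> x0 x12 hS.
have h : forall i : 'I_m, 2 * x / 3 * `|z i| - x ^+ 2 / 3 <= (1 - 2 * gaussQ (z i)) * z i.
  move=> i; apply: le_trans (term_lb (z i)).
  have n0 : 0 <= `|z i| := normr_ge0 _.
  case: (leP `|z i| 1) => hz.
    have := sqr_ge0 (`|z i| - x); nra.
  nra.
apply: le_trans (ler_sum _ (fun i _ => h i)).
rewrite sumrB -mulr_sumr sumr_const card_ord -mulr_natl.
have := ler_wpM2l (_ : 0 <= 2 * x / 3) hS.
move=> /(_ _) H; have := H ltac:(lra). nra.
Qed.

Lemma envy_sum m (ua ub : 'I_m -> R) c A D : 0 < c -> envy ua ub A <= - D ->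
  (1 + c) * D <= \sum_(i < m) `|c * ua i - ub i|.
Proof.
move=> c0; rewrite /envy ge_max => /andP[hab hba].
rewrite /envy_ab in hab; rewrite /envy_ba in hba.
rewrite (bigID (fun i => i \in A)) /=.
have e1 : \sum_(i < m | true && (i \in A)) `|c * ua i - ub i| >=
    c * \sum_(i in A) ua i - \sum_(i in A) ub i.
  rewrite mulr_sumr -sumrB; apply: ler_sum => i _; exact: ler_norm.
have e2 : \sum_(i < m | true && ~~ (i \in A)) `|c * ua i - ub i| >=
    \sum_(i in ~: A) ub i - c * \sum_(i in ~: A) ua i.
  rewrite mulr_sumr -sumrB.
  rewrite [X in _ <= X](eq_bigl (fun i => i \in ~: A)); last by move=> i; rewrite finset.in_setC.
  apply: ler_sum => i _; rewrite -normrN; apply: le_trans (ler_norm _); lra.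
have := ler_wpM2l (ltW c0) hab.
nra.
Qed.
End B.


Lemma asym (R : realType) (Delta : nat -> R)
  (hDlow : forall m : nat, (m%:R : R) `^ (1 / 4) * (ln (m%:R : R)) ^+ 2 <= Delta m)
  (hDo : (fun m : nat => Delta m / ((m%:R : R) / ln (m%:R : R))) @ \oo --> (0 : R)) :
  exists M0 : nat, forall m : nat, (M0 <= m)%N ->
   [/\ 0 < (m%:R : R), 0 < Delta m, 0 <= nqueries m (Delta m) &
      nqueries m (Delta m) * Delta m ^+ 2 / m%:R ^+ 3 <= 1 / 8].
Proof.
have e14 : (1 / 4 * 4%:R : R) = 1 by lra.
have [N _ HN] := cvgr0_norm_lt _ hDo (1 / 8) ltac:(lra).
exists (maxn (maxn N (960 ^ 4)) 2) => m.
rewrite !geq_max => /andP[/andP[mN mK] m2].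
set M : R := m%:R.
have M0 : 0 < M by rewrite /M ltr0n; apply: leq_trans m2.
have r0 : 0 <= M `^ (1 / 4) := powR_ge0 _ _.
have r4 : (M `^ (1 / 4)) ^+ 4 = M.
  rewrite -powR_mulrn// -powRrM e14.
  by rewrite powRr1// ltW.
have r960 : 960 <= M `^ (1 / 4).
  have hK : (960 : R) ^+ 4 <= M.
    rewrite /M -natrX ler_nat; exact: mK.
  have k0 : (0:R) <= 960 by rewrite ler0n.
  have h := @ler_pXn2r R 4 isT (960 : R) (M `^ (1 / 4)).
  rewrite nnegrE in h; rewrite -(h k0 r0) r4; exact: hK.
clear mK.
have := HN m mN; rewrite /= -/M => hlt.
have M2 : 2 <= M by rewrite /M (ler_nat R 2 m).
have L0 : 0 < ln M by apply: ln_gt0; lra.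
have rpos : 0 < M `^ (1 / 4) by lra.
have D0 : 0 < Delta m.
  apply: lt_le_trans (hDlow m).
  by rewrite mulr_gt0 // exprn_gt0.
have hDL : Delta m * ln M <= M / 8.
  have e : Delta m / (M / ln M) = Delta m * ln M / M.
    by rewrite invf_div mulrA.
  rewrite -/M e in hlt.
  have := ler_norm (Delta m * ln M / M).
  move=> h; have h' : Delta m * ln M / M < 1 / 8 by lra.
  rewrite ltr_pdivrMr // in h'; lra.
have [q0 qb] := @qbound R M (Delta m) M0 r960 D0 hDL.
by split.
Qed.

Theorem lemma12 (R : realType) (Delta : nat -> R)
  (hDlow : forall m : nat, (m%:R : R) `^ (1 / 4) * (ln (m%:R : R)) ^+ 2 <= Delta m)
  (hDo : (fun m : nat => Delta m / ((m%:R : R) / ln (m%:R : R))) @ \oo --> (0 : R)) :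
  exists M0 : nat, forall m : nat, (M0 <= m)%N ->
  forall ua ub : 'I_m -> R,
    (forall i, 0 <= ua i <= 1) -> (forall i, 0 <= ub i <= 1) ->
    (exists A : {set 'I_m}, envy ua ub A <= - Delta m) ->
  forall c : R, 0 < c ->
    let q := nqueries m (Delta m) in
    \sum_(i < m) (1 - 2 * gaussQ (zval q ua ub c i)) * zval q ua ub c i
      >= 21 / 100 * (q / (m%:R ^+ 2)) * ((1 + c) ^+ 2 / (1 + c ^+ 2)) * Delta m ^+ 2.
Proof.
have [M0 HM] := @asym R Delta hDlow hDo.
exists M0 => m hm ua ub _ _ [A hA] c c0.
rewrite /=; set q := nqueries m (Delta m).
have [Mpos Dpos q0 qb] := HM m hm.
rewrite -/q in q0 qb.
set M : R := m%:R in Mpos qb *.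
set D := Delta m in Dpos qb hA *.
have c2 : 0 < 1 + c ^+ 2 by rewrite ltr_pwDl // sqr_ge0.
set s := Num.sqrt (q / (M * (1 + c ^+ 2))).
have s0 : 0 <= s := sqrtr_ge0 _.
have s2 : s ^+ 2 = q / (M * (1 + c ^+ 2)).
  by rewrite sqr_sqrtr // divr_ge0 // mulr_ge0 // ltW.
set x := s * (1 + c) * D / M.
have x0 : 0 <= x.
  rewrite /x; apply: divr_ge0; last exact: ltW.
  apply: mulr_ge0; last exact: ltW.
  apply: mulr_ge0 => //; lra.
set Kc := (1 + c) ^+ 2 / (1 + c ^+ 2).
have Kc2 : Kc <= 2.
  rewrite /Kc ler_pdivrMr //; have := sqr_ge0 (c - 1); nra.
have Kc0 : 0 <= Kc by rewrite /Kc divr_ge0 ?sqr_ge0 // ltW.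
have ex2 : x ^+ 2 = q * D ^+ 2 / M ^+ 3 * Kc.
  rewrite /x /Kc !exprMn ?expr_div_n ?exprMn s2.
  field; apply/andP; split; apply: lt0r_neq0 => //.
have P0 : 0 <= q * D ^+ 2 / M ^+ 3.
  apply: divr_ge0; first by apply: mulr_ge0 => //; exact: sqr_ge0.
  apply: exprn_ge0; exact: ltW.
have x2 : x ^+ 2 <= 1 / 4 by rewrite ex2; nra.
have x12 : x <= 1 / 2 by nra.
have hW := envy_sum _ _ _ _ _ _ c0 hA.
have hS : M * x <= \sum_(i < m) `|zval q ua ub c i|.
  have -> : \sum_(i < m) `|zval q ua ub c i| = s * \sum_(i < m) `|c * ua i - ub i|.
    by rewrite mulr_sumr; apply: eq_bigr => i _; rewrite /zval normrM ger0_norm.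
  have -> : M * x = s * ((1 + c) * D).
    rewrite /x; field; exact: lt0r_neq0.
  exact: ler_wpM2l.
have := sum_lb _ _ _ x0 x12 hS.
have eT : 21 / 100 * (q / M ^+ 2) * Kc * D ^+ 2 = 21 / 100 * (M * x ^+ 2).
  rewrite ex2; field; exact: lt0r_neq0.
rewrite -/Kc eT.
have : 0 <= M * x ^+ 2.
  apply: mulr_ge0; [exact: ltW | exact: sqr_ge0].
lra.
Qed.
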